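(* Let $n\ge 2$ and let $\dot{\mathbf x}=\mathbf f(\sigma,\mathbf x)$ be a multistable regulatory system (MSRS) as defined in the context, with $f_k(\sigma,\mathbf x)=-l(x_k)+\sigma\frac{g(x_k)}{P(x_1,\dots,x_n)+h(x_k)}$; fix $\sigma>0$. Let $\mathbf r\in\mathbb R_{>0}^n$ be a non-diagonal equilibrium (i.e. not all coordinates equal) whose coordinates take the value $p$ exactly $i$ times and the value $q\ne p$ exactly $n-i$ times, where $1\le i\le\lfloor n/2\rfloor$. Let $\boldsymbol\rho=(p,\dots,p,q,\dots,q)$ be the point with $p$ in the first $i$ coordinates and $q$ in the last $n-i$ coordinates. For $k=1,\dots,n$ let $D_k(\mathbf x)=-\frac{P(\mathbf x)+h(x_k)}{l(x_k)}$, and set $$\beta=\frac{\partial f_1}{\partial x_1}(\boldsymbol\rho),\ \tau=\frac{\partial f_n}{\partial x_n}(\boldsymbol\rho),\ \gamma=\frac{\frac{\partial P}{\partial x_2}(\boldsymbol\rho)}{D_1(\boldsymbol\rho)},\ \xi=\frac{\frac{\partial P}{\partial x_{n-1}}(\boldsymbol\rho)}{D_n(\boldsymbol\rho)},\ \mu=\frac{\frac{\partial P}{\partial x_n}(\boldsymbol\rho)}{D_1(\boldsymbol\rho)},\ \nu=\frac{\frac{\partial P}{\partial x_1}(\boldsymbol\rho)}{D_n(\boldsymbol\rho)},$$ $$G_1=\tau-\xi,\quad G_2=\beta-\gamma,\quad G_3=\beta+\tau+(i-1)\gamma+(n-i-1)\xi,$$ $$G_4=\big(\beta+(i-1)\gamma\big)\big(\tau+(n-i-1)\xi\big)-i(n-i)\mu\nu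 .$$ Then $\det\left(\lambda I-J_{\mathbf f}(\mathbf r)\right)=(\lambda-G_1)^{n-i-1}(\lambda-G_2)^{i-1}\left(\lambda^2-G_3\lambda+G_4\right)$, where $J_{\mathbf f}=\left[\frac{\partial f_i}{\partial x_j}\right]$ is the Jacobian matrix with respect to $\mathbf x$.
   Context: A system of ODEs $\frac{dx_k}{dt}=f_k(\sigma,x_1,\dots,x_n)$, $k=1,\dots,n$, is called a multistable regulatory system (MSRS) if $f_k(\sigma,x_1,\dots,x_n)=-l(x_k)+\sigma\frac{g(x_k)}{P(x_1,\dots,x_n)+h(x_k)}$, where $l,g,h$ are real functions of one real variable and $P$ is a real function of $n$ real variables (all differentiable), and: (1) $\sigma$ is a positive parameter; (2) $P$ is symmetric, i.e. unchanged under interchanging any two of its arguments; (3) for every $k$ and every $(x_1,\dots,x_n)\in\mathbb R_{>0}^n$, $P(x_1,\dots,x_n)+h(x_k)>0$; (4) $l(z)\neq 0$ and for every $\sigma>0$ the function $z\mapsto \sigma\frac{g(z)}{l(z)}-h(z)$ has at most one extreme point for $z\in\mathbb R_{>0}$. For a given $\sigma$, a point $\mathbf r\in\mathbb R_{>0}^n$ is an equilibrium if $f_1(\sigma,\mathbf r)=\dots=f_n(\sigma,\mathbf r)=0$. *)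

(* Defs.v *)
From HB Require Import structures.
From mathcomp Require Import all_boot all_order all_algebra.
From mathcomp Require Import all_classical all_reals all_analysis.
From mathcomp Require Import fingroup perm.
Set Implicit Arguments. Unset Strict Implicit. Unset Printing Implicit Defensive.
Import Order.TTheory GRing.Theory Num.Theory.
Import numFieldNormedType.Exports.
Local Open Scope ring_scope.

Section MSRS.
Variables (R : realType) (n : nat).

Definition upd (x : 'rV[R]_n) (j : 'I_n) (t : R) : 'rV[R]_n :=
  \row_m (if m == j then t else x 0 m).

Definition partial (F : 'rV[R]_n -> R) (j : 'I_n) (x : 'rV[R]_n) : R :=
  derive1 (fun t => F (upd x j t)) (x 0 j).

Definition msrs_f (l g h : R -> R) (P : 'rV[R]_n -> R) (sigma : R)
  (k : 'I_n) (x : 'rV[R]_n) : R :=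
  - l (x 0 k) + sigma * (g (x 0 k) / (P x + h (x 0 k))).

Definition msrs_jacobian (l g h : R -> R) (P : 'rV[R]_n -> R) (sigma : R)
  (x : 'rV[R]_n) : 'M[R]_n :=
  \matrix_(k, j) partial (msrs_f l g h P sigma k) j x.

Definition msrs_D (l h : R -> R) (P : 'rV[R]_n -> R) (k : 'I_n)
  (x : 'rV[R]_n) : R :=
  - ((P x + h (x 0 k)) / l (x 0 k)).

Definition positive_point (x : 'rV[R]_n) := forall k, 0 < x 0 k.

Definition symmetric_fun (P : 'rV[R]_n -> R) :=
  forall (x : 'rV[R]_n) (a b : 'I_n), P (\row_m x 0 (tperm a b m)) = P x.

Definition extreme_point (F : R -> R) (z : R) :=
  (\forall y \near z, F y <= F z) \/ (\forall y \near z, F z <= F y).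

Definition is_MSRS (l g h : R -> R) (P : 'rV[R]_n -> R) :=
  (forall z, derivable l z 1) /\ (forall z, derivable g z 1) /\
  (forall z, derivable h z 1) /\ (forall x, differentiable P x) /\
  symmetric_fun P /\
  (forall x, positive_point x -> forall k, 0 < P x + h (x 0 k)) /\
  (forall z, 0 < z -> l z != 0) /\
      (forall sigma, 0 < sigma -> forall z1 z2, 0 < z1 -> 0 < z2 ->
         extreme_point (fun z => sigma * (g z / l z) - h z) z1 ->
         extreme_point (fun z => sigma * (g z / l z) - h z) z2 -> z1 = z2).

Definition is_equilibrium (l g h : R -> R) (P : 'rV[R]_n -> R) (sigma : R)
  (x : 'rV[R]_n) := forall k, msrs_f l g h P sigma k x = 0.

(* the ordinal with value k (default 0) *)
Definition ordn (h0 : (0 < n)%N) (k : nat) : 'I_n := insubd (Ordinal h0) k.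

End MSRS.

(* Main.v *)
Require Import Defs.
From HB Require Import structures.
From mathcomp Require Import all_boot all_order all_algebra.
From mathcomp Require Import all_classical all_reals all_analysis.
From mathcomp Require Import fingroup perm.
From mathcomp Require Import ring lra.
Import Order.TTheory GRing.Theory Num.Theory.
Import numFieldNormedType.Exports.
Local Open Scope ring_scope.
From mathcomp Require Import zify.
Lemma sylv (R : comNzRingType) m k (A : 'M[R]_(m,k)) (B : 'M[R]_(k,m)) :
  \det (1%:M - A *m B) = \det (1%:M - B *m A).
Proof.
have e1 : block_mx 1%:M 0 B 1%:M *m block_mx 1%:M A 0 (1%:M - B *m A)
   = block_mx 1%:M A B 1%:M.
  rewrite mulmx_block !mul1mx !mulmx1 !mul0mx ?mulmx0 ?addr0 ?add0r.
  by rewrite addrC subrK.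
have e2 : block_mx (1%:M - A *m B) A 0 1%:M *m block_mx 1%:M 0 B 1%:M
   = block_mx 1%:M A B 1%:M.
  rewrite mulmx_block !mul1mx !mulmx1 ?mul0mx ?mulmx0 ?addr0 ?add0r.
  by rewrite subrK.
have := congr1 determinant e1; rewrite -e2 !det_mulmx.
rewrite !det_lblock !det_ublock !det1 !mul1r ?mulr1 => ->. by [].
Qed.

Lemma det_diag_lowrank (R : fieldType) n (e : 'I_n -> R) (U : 'M[R]_(n,2)) (W : 'M[R]_(2,n)) :
  (forall k, e k != 0) ->
  \det (diag_mx (\row_k e k) - U *m W) =
  (\prod_k e k) * \det (1%:M - W *m (\matrix_(k,c) (U k c / e k))).
Proof.
move=> ne.
have -> : diag_mx (\row_k e k) - U *m W =
   diag_mx (\row_k e k) *m (1%:M - (\matrix_(k,c) (U k c / e k)) *m W).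
  rewrite mulmxBr mulmx1 mulmxA; congr (_ - (_ *m _)).
  apply/matrixP=> a b; rewrite mul_diag_mx !mxE mulrC -mulrA mulVf ?mulr1 //.
by rewrite det_mulmx det_diag sylv; congr (_ * _); apply: eq_bigr => k _; rewrite mxE.
Qed.

Lemma det22 (R : comNzRingType) (A : 'M[R]_2) : \det A = A 0 0 * A 1 1 - A 0 1 * A 1 0.
Proof.
rewrite (expand_det_row _ 0) !big_ord_recl big_ord0 addr0 /cofactor !det_mx11 !mxE /=.
rewrite /bump /= expr0 expr1 !mul1r mulN1r mulrN.
have -> : lift (0 : 'I_2) 0 = 1 by apply/val_inj.
by have -> : lift (1 : 'I_2) 0 = 0 by apply/val_inj.
Qed.

Lemma poly_eq_ev (R : realType) (p q : {poly R}) c1 c2 :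
  (forall x, x != c1 -> x != c2 -> p.[x] = q.[x]) -> p = q.
Proof.
move=> H; apply/eqP; rewrite -subr_eq0; apply/eqP.
pose K := `|c1| + `|c2| + 1.
pose rs := [seq K + m%:R | m <- iota 0 (size (p - q))].
apply: (@roots_geq_poly_eq0 _ _ rs).
- apply/allP => y /mapP [m _ ->]; rewrite /root hornerD hornerN H ?subrr //.
  + have h1 := ler_norm c1; have h2 := normr_ge0 c2; have h3 := normr_ge0 c1.
    have hm : (0 : R) <= m%:R by rewrite ler0n.
    by rewrite gt_eqF // /K; lra.
  + have h1 := ler_norm c2; have h2 := normr_ge0 c2; have h3 := normr_ge0 c1.
    have hm : (0 : R) <= m%:R by rewrite ler0n.
    by rewrite gt_eqF // /K; lra.
- rewrite map_inj_uniq ?iota_uniq // => a b /addrI /eqP; rewrite eqr_nat => /eqP.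
  by [].
- by rewrite size_map size_iota.
Qed.

Lemma char_poly_ev (R : comNzRingType) n (M : 'M[R]_n) x :
  (char_poly M).[x] = \det (x%:M - M).
Proof.
rewrite /char_poly -horner_evalE -det_map_mx; congr (\det _); apply/matrixP => a b.
by rewrite !mxE /= rmorphB rmorphMn /= !horner_evalE hornerX hornerC.
Qed.

Lemma sum_if (R : nmodType) n (T : {set 'I_n}) (u v : R) :
  \sum_(k : 'I_n) (if k \in T then u else v) = u *+ #|T| + v *+ #|~: T|.
Proof.
rewrite (bigID (fun k => k \in T)) /=.
rewrite [X in X + _](eq_bigr (fun _ => u)); last by move=> k ->.
rewrite [X in _ + X](eq_bigr (fun _ => v)); last by move=> k /negPf ->.
rewrite !sumr_const; congr (_ *+ _ + _ *+ _); apply: eq_card => k; by rewrite !inE.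
Qed.

Lemma prod_if (R : comNzRingType) n (T : {set 'I_n}) (u v : R) :
  \prod_(k : 'I_n) (if k \in T then u else v) = u ^+ #|T| * v ^+ #|~: T|.
Proof.
rewrite (bigID (fun k => k \in T)) /=.
rewrite [X in X * _](eq_bigr (fun _ => u)); last by move=> k ->.
rewrite [X in _ * X](eq_bigr (fun _ => v)); last by move=> k /negPf ->.
rewrite !prodr_const; congr (_ ^+ _ * _ ^+ _); apply: eq_card => k; by rewrite !inE.
Qed.

Lemma key (R : realType) n (T : {set 'I_n}) (M : 'M[R]_n) (be ta ga xi mu nu : R) i1 j1 :
  #|T| = i1.+1 -> #|~: T| = j1.+1 ->
  (forall k, M k k = if k \in T then be else ta) ->
  (forall k j, k != j -> M k j = if k \in T then (if j \in T then ga else mu)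
                                  else (if j \in T then nu else xi)) ->
  char_poly M = ('X - (ta - xi)%:P) ^+ j1 * ('X - (be - ga)%:P) ^+ i1 *
    ('X ^+ 2 - (be + ta + i1%:R * ga + j1%:R * xi) *: 'X +
     ((be + i1%:R * ga) * (ta + j1%:R * xi) - (i1.+1 * j1.+1)%:R * mu * nu)%:P).
Proof.
move=> cT cC Md Mo.
apply: (@poly_eq_ev _ _ _ (be - ga) (ta - xi)) => x xa xb.
set a := x - (be - ga); set b := x - (ta - xi).
have a0 : a != 0 by rewrite subr_eq0.
have b0 : b != 0 by rewrite subr_eq0.
pose e := fun k : 'I_n => if k \in T then a else b.
pose U : 'M[R]_(n,2) := \matrix_(k, c) (if c == 0 then (k \in T)%:R else (k \notin T)%:R).
pose W : 'M[R]_(2,n) := \matrix_(c, j) (if c == 0 then (if j \in T then ga else mu)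
                                         else (if j \in T then nu else xi)).
have E : x%:M - M = diag_mx (\row_k e k) - U *m W.
  apply/matrixP => k j; rewrite !mxE !big_ord_recl big_ord0 !mxE /=.
  have [->|kj] := eqVneq k j.
    rewrite Md ?eqxx /e /= ?mulr1n; case: (j \in T) => /=; rewrite /a /b; ring.
  rewrite Mo // ?(negPf kj) /e /= ?mulr0n; case: (k \in T); case: (j \in T) => /=; ring.
rewrite char_poly_ev E det_diag_lowrank; last by move=> k; rewrite /e; case: ifP.
rewrite det22 (prod_if _ _ T a b) cT cC.
have sm : forall (F : 'I_n -> R) u v, (forall j, j \in T -> F j = u) ->
   (forall j, j \notin T -> F j = v) -> \sum_j F j = u *+ i1.+1 + v *+ j1.+1.
  move=> F u v Fu Fv; rewrite -cT -cC -sum_if; apply: eq_bigr => j _.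
  by case: ifP => [/Fu|/negbT/Fv].
set V := \matrix_(k, c) (U k c / e k).
rewrite !mxE /=.
rewrite (sm (fun j => W 0 j * V j 0) (ga * (1 / a)) (mu * (0 / b))); first last.
  by move=> j /negPf jT; rewrite /V /W /U !mxE /e jT.
  by move=> j jT; rewrite /V /W /U !mxE /e jT.
rewrite (sm (fun j => W 1 j * V j 1) (nu * (0 / a)) (xi * (1 / b))); first last.
  by move=> j /negPf jT; rewrite /V /W /U !mxE /e jT.
  by move=> j jT; rewrite /V /W /U !mxE /e jT.
rewrite (sm (fun j => W 0 j * V j 1) (ga * (0 / a)) (mu * (1 / b))); first last.
  by move=> j /negPf jT; rewrite /V /W /U !mxE /e jT.
  by move=> j jT; rewrite /V /W /U !mxE /e jT.
rewrite (sm (fun j => W 1 j * V j 0) (nu * (1 / a)) (xi * (0 / b))); first last.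
  by move=> j /negPf jT; rewrite /V /W /U !mxE /e jT.
  by move=> j jT; rewrite /V /W /U !mxE /e jT.
rewrite !(hornerM, hornerD, hornerN, hornerC, hornerX, hornerZ, horner_exp).
rewrite (exprS a) (exprS b) natrM.
set I := i1%:R; set J := j1%:R.
have mi : forall y : R, y *+ i1.+1 = y * (I + 1) by move=> y; rewrite /I mulrSr mulrDr mulr1 mulr_natr.
have mj : forall y : R, y *+ j1.+1 = y * (J + 1) by move=> y; rewrite /J mulrSr mulrDr mulr1 mulr_natr.
have ei : (i1.+1)%:R = I + 1 :> R by rewrite mi mul1r.
have ej : (j1.+1)%:R = J + 1 :> R by rewrite mj mul1r.
rewrite !mi !mj ?ei ?ej ?mul1r.
move: a0 b0; rewrite /a /b => a0 b0.
set A := (x - (be - ga)) ^+ i1; set B := (x - (ta - xi)) ^+ j1.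
clearbody A B I J; move: a0 b0; clear.
move=> a0 b0; field.
by rewrite a0 b0.
Qed.
Section S.
Variables (R : realType) (n : nat).
Implicit Types (x : 'rV[R]_n) (P : 'rV[R]_n -> R).

Lemma upd_diff x j t0 : differentiable (fun t : R => upd x j t) t0.
Proof.
have -> : (fun t : R => upd x j t) =
   (fun t => upd x j 0 + t *: (\row_m ((m == j)%:R : R))).
  apply/funext => t; apply/rowP => m; rewrite !mxE.
  by case: eqP => _; rewrite ?mulr1 ?mulr0 ?add0r ?addr0.
apply: differentiableD; first exact: differentiable_cst.
by apply: differentiableZl.
Qed.

Lemma derivable_updP P x j : (forall y, differentiable P y) ->
  derivable (fun t => P (upd x j t)) (x 0 j) 1.
Proof.
move=> dP; apply: diff_derivable.
exact: (differentiable_comp (upd_diff x j (x 0 j)) (dP _)).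
Qed.

Lemma partial_f_off l g h P sigma x k j : (forall y, differentiable P y) ->
  k != j -> l (x 0 k) != 0 -> P x + h (x 0 k) != 0 ->
  msrs_f l g h P sigma k x = 0 ->
  partial (msrs_f l g h P sigma k) j x = partial P j x / msrs_D l h P k x.
Proof.
move=> dP kj l0 d0 eq0.
rewrite /partial.
set Q := fun t => P (upd x j t).
set c := x 0 k.
have updk : forall t, (upd x j t) 0 k = c by move=> t; rewrite /upd mxE (negPf kj).
have -> : (fun t => msrs_f l g h P sigma k (upd x j t)) =
   cst (- l c) + (sigma * g c) \*: (fun t => (Q t + h c)^-1).
  apply/funext => t; rewrite /msrs_f updk /= mulrA.
  by [].
have dQ : derivable Q (x 0 j) 1 by apply: derivable_updP.
have dQc : derivable (Q + cst (h c)) (x 0 j) 1.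
  by apply: derivableD => //; exact: derivable_cst.
have Qx : Q (x 0 j) = P x.
  rewrite /Q; congr P; apply/rowP => m; rewrite mxE; by case: eqP => [->|].
have nz : (Q + cst (h c)) (x 0 j) != 0.
  by change (Q (x 0 j) + h c != 0); rewrite Qx.
have dV := derivableV nz dQc.
have dC : derivable (cst (- l c)) (x 0 j) 1 := derivable_cst _ _ _.
have dC2 : derivable (cst (h c)) (x 0 j) 1 := derivable_cst _ _ _.
have dZ : derivable ((sigma * g c) \*: (fun t => (Q t + h c)^-1)) (x 0 j) 1.
  exact: derivableZ dV.
rewrite derive1E (deriveD dC dZ) derive_cst add0r (deriveZ _ dV) (deriveV nz dQc).
rewrite (deriveD dQ dC2) derive_cst addr0.
change ((sigma * g c) * (- (Q (x 0 j) + h c) ^- 2 * 'D_1 Q (x 0 j)) =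
  derive1 Q (x 0 j) / msrs_D l h P k x).
rewrite Qx -derive1E.
move: eq0; rewrite /msrs_f /msrs_D -/c => eq0.
have e1 : sigma * g c = l c * (P x + h c).
  apply: (@mulIf _ (P x + h c)^-1); first by rewrite invr_eq0.
  rewrite mulrK ?unitfE //; apply/eqP; rewrite -subr_eq0; apply/eqP.
  rewrite -[_ - _]opprK -eq0 -mulrA; ring.
rewrite e1 /=; field.
by rewrite l0 d0.
Qed.

Definition rowp x (s : {perm 'I_n}) : 'rV[R]_n := \row_k x 0 (s k).
Arguments rowp : clear implicits.

Lemma sym_tperm P : symmetric_fun P -> forall x a b (u : {perm 'I_n}),
  P (rowp x (tperm a b * u)%g) = P (rowp x u).
Proof.
move=> sP x a b u; rewrite -(sP (rowp x u) a b).
have -> : rowp x (tperm a b * u)%g = \row_m (rowp x u) 0 (tperm a b m).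
  by apply/rowP => k; rewrite !mxE permM.
by [].
Qed.

Lemma sym_perm P : symmetric_fun P -> forall x s, P (rowp x s) = P x.
Proof.
move=> sP x s; have [ts -> _] := prod_tpermP s.
elim: ts x => [|t ts IH] x.
  rewrite big_nil; have -> : rowp x 1 = x by apply/rowP => k; rewrite !mxE perm1.
  by [].
by rewrite big_cons (sym_tperm _ sP) IH.
Qed.

Lemma upd_perm x s j t : upd (rowp x s) j t = rowp (upd x (s j) t) s.
Proof. by apply/rowP => k; rewrite !mxE (inj_eq perm_inj). Qed.

Lemma partial_perm (F : 'rV[R]_n -> R) j x s :
  partial F j (rowp x s) = partial (fun y => F (rowp y s)) (s j) x.
Proof.
rewrite /partial {2}/rowp mxE; congr (derive1 _ _); apply/funext => t.
by rewrite upd_perm.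
Qed.

Lemma partialP_perm P j x s : symmetric_fun P ->
  partial P j (rowp x s) = partial P (s j) x.
Proof.
move=> sP; rewrite partial_perm.
have -> : (fun y => P (rowp y s)) = P by apply/funext => y; exact: sym_perm.
by [].
Qed.

Lemma jac_perm l g h P sigma x s k j : symmetric_fun P ->
  msrs_jacobian l g h P sigma (rowp x s) k j =
  msrs_jacobian l g h P sigma x (s k) (s j).
Proof.
move=> sP; rewrite !mxE partial_perm.
have -> : (fun y => msrs_f l g h P sigma k (rowp y s)) = msrs_f l g h P sigma (s k).
  by apply/funext => y; rewrite /msrs_f sym_perm // /rowp mxE.
by [].
Qed.

End S.
Arguments rowp {R n}.
Lemma exists_perm n (T : {set 'I_n}) :
  exists s : {perm 'I_n}, forall k, (s k \in T) = (k < #|T|)%N.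
Proof.
pose e := enum T ++ enum (~: T).
have se : size e = n by rewrite size_cat -!cardE cardsC card_ord.
have ue : uniq e.
  rewrite cat_uniq !enum_uniq /= andbT; apply/hasPn => x.
  by rewrite !mem_enum inE.
pose f := fun k : 'I_n => nth k e k.
have inj_f : injective f.
  move=> a b; rewrite /f (set_nth_default a b) ?se ?ltn_ord // => /eqP.
  by rewrite nth_uniq ?se // => /eqP; apply: val_inj.
exists (perm inj_f) => k; rewrite permE /f nth_cat cardE.
case: ltnP => hk.
  by rewrite -mem_enum mem_nth.
have hk2 : (k - size (enum T) < size (enum (~: T)))%N.
  move: se hk; rewrite size_cat; have := ltn_ord k.
  by move=> kn se2 hk3; rewrite ltn_subLR // se2.
by have := mem_nth k hk2; rewrite mem_enum inE => /negPf.
Qed.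

Theorem theorem4 (R : realType) (n : nat) (hn : (2 <= n)%N)
  (l g h : R -> R) (P : 'rV[R]_n -> R) (sigma : R)
  (hMSRS : is_MSRS l g h P) (hsigma : 0 < sigma)
  (r : 'rV[R]_n) (p q : R) (i : nat)
  (hr_pos : positive_point r) (hr_eq : is_equilibrium l g h P sigma r)
  (hpq : p != q)
  (hi1 : (1 <= i)%N) (hi2 : (i <= n./2)%N)
  (hcard_p : #|[set k : 'I_n | r 0 k == p]| = i)
  (hcard_q : #|[set k : 'I_n | r 0 k == q]| = (n - i)%N) :
  let rho : 'rV[R]_n := \row_k (if (k < i)%N then p else q) in
  let o := ordn (ltnW hn) in
  let beta := partial (msrs_f l g h P sigma (o 0%N)) (o 0%N) rho in
  let tau := partial (msrs_f l g h P sigma (o (n - 1)%N)) (o (n - 1)%N) rho in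
  let gamma := partial P (o 1%N) rho / msrs_D l h P (o 0%N) rho in
  let xi := partial P (o (n - 2)%N) rho / msrs_D l h P (o (n - 1)%N) rho in
  let mu := partial P (o (n - 1)%N) rho / msrs_D l h P (o 0%N) rho in
  let nu := partial P (o 0%N) rho / msrs_D l h P (o (n - 1)%N) rho in
  let G1 := tau - xi in
  let G2 := beta - gamma in
  let G3 := beta + tau + (i - 1)%:R * gamma + (n - i - 1)%:R * xi in
  let G4 := (beta + (i - 1)%:R * gamma) * (tau + (n - i - 1)%:R * xi)
            - (i * (n - i))%:R * mu * nu in
  char_poly (msrs_jacobian l g h P sigma r)
  = ('X - G1%:P) ^+ (n - i - 1) * ('X - G2%:P) ^+ (i - 1)
    * ('X ^+ 2 - G3 *: 'X + G4%:P).

Proof.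
move=> rho o beta tau gamma xi mu nu G1 G2 G3 G4.
have [dl [dg [dh [dP [sP [posP [lnz _]]]]]]] := hMSRS.
set T := [set k : 'I_n | r 0 k == p].
have hin : (i < n)%N by move: hi2; rewrite geq_half_double -addnn; lia.
have [i1 ei] : exists i1, i = i1.+1 by exists i.-1; rewrite prednK.
have [j1 ej] : exists j1, (n - i)%N = j1.+1 by exists (n - i).-1; rewrite prednK // subn_gt0.
have cT : #|T| = i1.+1 by rewrite -ei.
have cC : #|~: T| = j1.+1.
  have hc := cardsC T; rewrite card_ord in hc; rewrite -ej; move: hc; rewrite hcard_p; lia.
have pq : forall k, k \notin T -> r 0 k = q.
  pose Q := [set k : 'I_n | r 0 k == q].
  have QC : Q = ~: T.
    apply/eqP; rewrite eqEcard; apply/andP; split.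
      apply/fintype.subsetP => k; rewrite !inE => /eqP ->; by rewrite eq_sym.
    by rewrite cC hcard_q ej.
  move=> k kT; have : k \in Q by rewrite QC finset.in_setC.
  by rewrite inE => /eqP.
have [s hs] := exists_perm _ T.
have rhoE : forall k, rho 0 k = if (k < i)%N then p else q by move=> k; rewrite mxE.
have erho : rho = rowp r s.
  apply/rowP => k; rewrite rhoE !mxE -hcard_p -hs.
  case: ifP => h1; first by move: h1; rewrite inE => /eqP.
  by rewrite pq // h1.
have er : r = rowp rho (s^-1)%g.
  by apply/rowP => k; rewrite erho !mxE permKV.
have hsi : forall k, ((s^-1)%g k < i)%N = (k \in T).
  by move=> k; rewrite -hcard_p -hs permKV.
have fix_t : forall a b, rho 0 a = rho 0 b -> rowp rho (tperm a b) = rho.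
  move=> a b hab; apply/rowP => k; rewrite !mxE.
  by move: hab; rewrite !rhoE => hab; case: tpermP => [->|->|] //; rewrite hab.
have jac_same : forall a b, rho 0 a = rho 0 b ->
    msrs_jacobian l g h P sigma rho a a = msrs_jacobian l g h P sigma rho b b.
  by move=> a b hab; rewrite -{1}(fix_t a b hab) jac_perm // tpermL.
have part_same : forall a b, rho 0 a = rho 0 b -> partial P a rho = partial P b rho.
  by move=> a b hab; rewrite -{1}(fix_t a b hab) partialP_perm // tpermL.
have val_o : forall k, (k < n)%N -> val (o k) = k.
  by move=> k kn; rewrite /o /ordn val_insubd kn.
have rho0 : rho 0 (o 0%N) = p by rewrite rhoE val_o ?ei //; lia.
have rhon : rho 0 (o (n - 1)%N) = q by rewrite rhoE val_o; [rewrite ifN //; lia | lia].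
rewrite /G1 /G2 /G3 /G4.
have -> : (n - i - 1)%N = j1 by rewrite ej subn1.
have -> : (i - 1)%N = i1 by rewrite ei subn1.
have -> : (i * (n - i))%N = (i1.+1 * j1.+1)%N by rewrite ej ei.
have rT : forall k, k \in T -> r 0 k = p by move=> k; rewrite inE => /eqP.
have Pr : P r = P rho by rewrite {1}er sym_perm.
have Dp : forall k, k \in T -> msrs_D l h P k r = msrs_D l h P (o 0%N) rho.
  by move=> k kT; rewrite /msrs_D Pr rT // rho0.
have Dq : forall k, k \notin T -> msrs_D l h P k r = msrs_D l h P (o (n - 1)%N) rho.
  by move=> k kT; rewrite /msrs_D Pr pq // rhon.
apply: key; [exact: cT | exact: cC | |].
  move=> k; rewrite {1}er jac_perm // -hsi.
  case: ifP => hk.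
    have -> : beta = msrs_jacobian l g h P sigma rho (o 0%N) (o 0%N) by rewrite mxE.
    by apply: jac_same; rewrite rhoE hk rho0.
  have -> : tau = msrs_jacobian l g h P sigma rho (o (n - 1)%N) (o (n - 1)%N) by rewrite mxE.
  by apply: jac_same; rewrite rhoE hk rhon.
move=> k j kj; rewrite mxE (partial_f_off _ _ _ _ _ _ _ _ _ _ dP kj); first last.
- exact: hr_eq.
- by apply: lt0r_neq0; apply: posP.
- by apply: lnz.
rewrite {1}er partialP_perm //.
have rhoj : rho 0 ((s^-1)%g j) = if j \in T then p else q by rewrite rhoE hsi.
case kT: (k \in T); case jT: (j \in T).
- rewrite Dp // /gamma; congr (_ / _); apply: part_same; rewrite rhoj jT rhoE val_o.
    have : [set k; j] \subset T by rewrite finset.subUset !finset.sub1set kT jT.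
    move/subset_leq_card; rewrite cards2 kj hcard_p => h2; by rewrite ifT.
  lia.
- rewrite Dp // /mu; congr (_ / _); apply: part_same; by rewrite rhoj jT rhon.
- rewrite Dq ?kT // /nu; congr (_ / _); apply: part_same; by rewrite rhoj jT rho0.
- rewrite Dq ?kT // /xi; congr (_ / _); apply: part_same; rewrite rhoj jT rhoE val_o.
    have : [set k; j] \subset ~: T by rewrite finset.subUset !finset.sub1set !finset.in_setC kT jT.
    move/subset_leq_card; rewrite cards2 kj cC => h2; rewrite ifF //. lia.
  lia.
Qed.
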